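(* Let $\alpha\in(0,\pi/2)$ and let $X_0=(0,0),X_1,\dots,X_n$ be points on the $x$-axis, $X_i=(x_i,0)$, none of $X_1,\dots,X_n$ redundant. For $0\le j\le n$ let $T_j$ be the apex of the feasibility cone $\mathrm{FC}(X_0,\dots,X_j)$. Then for every $0\le i\le n$, the polygonal path $T_0,T_1,\dots,T_i$ has total length $\sum_{k=0}^{i-1}|T_kT_{k+1}|$ equal to the distance $|X_iT_i|$ between $(x_i,0)$ and $T_i$.
   Context: For a point $X=(x,0)$ and $\alpha\in(0,\pi/2)$, the feasibility cone is $\mathrm{FC}(X)=\{(u,v): v\ge0,\ |u-x|\le v\tan\alpha\}$; for a finite set of points on the $x$-axis, its feasibility cone is the intersection of their cones. If the points have minimum $x$-coordinate $l$ and maximum $x$-coordinate $m$, this intersection is the cone $\{(u,v): v\ge0,\ l\le u - \ldots\}$ with apex $\left(\frac{l+m}{2},\frac{m-l}{2\tan\alpha}\right)$, i.e. the set of points whose left and right coverage bounds $u\mp v\tan\alpha$ contain $[l,m]$. A point $X_{i+1}=(x_{i+1},0)$ is redundant if $x_{i+1}\in[\min_{j\le i}x_j,\max_{j\le i}x_j]$. *)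

(* Defs.v *)
From Stdlib Require Import Reals Lra.
Open Scope R_scope.

Definition point : Type := (R * R)%type.

Definition pdist (P Q : point) : R :=
  sqrt ((fst P - fst Q) ^ 2 + (snd P - snd Q) ^ 2).

Definition FC1 (alpha : R) (x : R) (P : point) : Prop :=
  0 <= snd P /\ Rabs (fst P - x) <= snd P * tan alpha.

Definition FC (alpha : R) (x : nat -> R) (j : nat) (P : point) : Prop :=
  forall k, (k <= j)%nat -> FC1 alpha (x k) P.

Fixpoint minx (x : nat -> R) (j : nat) : R :=
  match j with
  | O => x O
  | S j' => Rmin (minx x j') (x j)
  end.

Fixpoint maxx (x : nat -> R) (j : nat) : R :=
  match j with
  | O => x O
  | S j' => Rmax (maxx x j') (x j)
  end.

Definition apex (alpha : R) (x : nat -> R) (j : nat) : point :=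
  ((minx x j + maxx x j) / 2, (maxx x j - minx x j) / (2 * tan alpha)).

Definition redundant (x : nat -> R) (i : nat) : Prop :=
  minx x i <= x (S i) <= maxx x i.

Fixpoint path_length (T : nat -> point) (i : nat) : R :=
  match i with
  | O => 0
  | S i' => path_length T i' + pdist (T i') (T i)
  end.

(* Main.v *)
Require Import Defs.
From Stdlib Require Import Reals Lra Lia.
Open Scope R_scope.

Lemma sq_lemma (t u a b : R) : t <> 0 ->
  (a = u/2 \/ a = -(u/2)) -> (b = u/(2*t) \/ b = -(u/(2*t))) ->
  sqrt (a^2 + b^2) = Rabs u * sqrt (/4 + /(4*t^2)).
Proof.
  intros Ht Ha Hb.
  assert (Ea : a^2 = (u/2)^2) by (destruct Ha; subst; ring).
  assert (Eb : b^2 = (u/(2*t))^2) by (destruct Hb; subst; ring).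
  rewrite Ea, Eb.
  replace ((u/2)^2 + (u/(2*t))^2) with ((Rabs u)^2 * (/4 + /(4*t^2))).
  2:{ rewrite pow2_abs. field. auto. }
  rewrite sqrt_mult_alt by (apply pow2_ge_0).
  rewrite sqrt_pow2 by apply Rabs_pos. reflexivity.
Qed.

Lemma min_le_max x j : minx x j <= maxx x j.
Proof.
  induction j; simpl. lra.
  unfold Rmin, Rmax; repeat destruct Rle_dec; lra.
Qed.

Theorem lemma1 (alpha : R) (n : nat) (x : nat -> R) :
  0 < alpha < PI / 2 ->
  x 0%nat = 0 ->
  (forall i : nat, (i < n)%nat -> ~ redundant x i) ->
  forall i : nat, (i <= n)%nat ->
    path_length (apex alpha x) i = pdist (x i, 0) (apex alpha x i).
Proof.
  intros Ha _ Hnr.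
  assert (Ht : 0 < tan alpha) by (apply tan_gt_0; lra).
  assert (Ht0 : tan alpha <> 0) by lra.
  set (t := tan alpha) in *.
  set (K := sqrt (/4 + /(4*t^2))).
  assert (P : forall i, (i <= n)%nat ->
    path_length (apex alpha x) i = K * (maxx x i - minx x i) /\
    (x i = minx x i \/ x i = maxx x i)).
  { induction i as [|k IH]; intros Hi.
    - simpl. split; [ring | auto].
    - destruct IH as [IH1 IH2]; [lia|].
      assert (Hr := Hnr k ltac:(lia)). unfold redundant in Hr.
      assert (Hm := min_le_max x k).
      simpl path_length. rewrite IH1.
      unfold pdist, apex; simpl fst; simpl snd; fold t.
      simpl minx; simpl maxx.
      destruct (Rlt_dec (x (S k)) (minx x k)) as [Hlt|Hge].
      + rewrite (Rmin_right (minx x k)) by lra.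
        rewrite (Rmax_left (maxx x k)) by lra.
        rewrite (sq_lemma t (x (S k) - minx x k)) by (auto; first [right; field; auto | left; field; auto]).
        split; [|left; reflexivity].
        rewrite Rabs_left by lra. fold K. ring.
      + assert (Hgt : x (S k) > maxx x k) by lra.
        rewrite (Rmin_left (minx x k)) by lra.
        rewrite (Rmax_right (maxx x k)) by lra.
        rewrite (sq_lemma t (x (S k) - maxx x k)) by (auto; first [right; field; auto | left; field; auto]).
        split; [|right; reflexivity].
        rewrite Rabs_right by lra. fold K. ring. }
  intros i Hi. destruct (P i Hi) as [H1 [H2|H2]]; rewrite H1;
  assert (Hm := min_le_max x i);
  unfold pdist, apex; simpl fst; simpl snd; fold t; rewrite H2.
  - rewrite (sq_lemma t (maxx x i - minx x i)) by (auto; first [right; field; auto | left; field; auto]).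
    rewrite Rabs_right by lra. fold K. ring.
  - rewrite (sq_lemma t (maxx x i - minx x i)) by (auto; first [right; field; auto | left; field; auto]).
    rewrite Rabs_right by lra. fold K. ring.
Qed.
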